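(* Let $\omega=\frac{-1+\sqrt{-3}}{2}$. For $k=1,2,3$ let $C_k\subset\mathbf{C}^2$ be the affine curve $y_k^2=x_k^3-1$ and $g_k(x_k,y_k)=(\omega x_k,-y_k)$. Let $V=C_1\times C_2\times C_3$, $g=g_1\times g_2\times g_3$, and $W=V/\langle g\rangle$. Then the affine coordinate ring $\mathbf{C}[W]$ is the subring $$R=\mathbf{C}[y_1^2,y_2^2,y_3^2,y_1y_2,y_2y_3,y_3y_1,\ x_1^ix_2^jx_3^k\ (0\le i,j,k\le 2,\ i+j+k=3)]$$ of the ring $\tilde R=\mathbf{C}[y_1,y_2,y_3,x_1,x_2,x_3]/(y_1^2-x_1^3+1,\ y_2^2-x_2^3+1,\ y_3^2-x_3^3+1)$.
   Context: $\tilde R$ is the affine coordinate ring of $V$, and $\mathbf{C}[W]$ is identified with the invariant subring $\tilde R^{g}$. *)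

(* Defs.v *)
From HB Require Import structures.
From mathcomp Require Import all_boot all_order all_algebra.
From mathcomp Require Import mpoly.
From mathcomp Require Import complex.
From mathcomp Require reals.

Set Implicit Arguments.
Unset Strict Implicit.
Unset Printing Implicit Defensive.
Import Order.TTheory GRing.Theory Num.Theory.
Local Open Scope ring_scope.

(* Polynomial ring C[x1,x2,x3,y1,y2,y3]: variable 'X_k (k<3) is x_(k+1),
   variable 'X_(3+k) is y_(k+1). *)
Section Defs.
Variable C : numClosedFieldType.

Definition P6 := {mpoly C[6]}.

Definition xv (k : 'I_3) : P6 := 'X_(lshift 3 k).
Definition yv (k : 'I_3) : P6 := 'X_(rshift 3 k).

Definition omega : C := (-1 + sqrtC (-3)) / 2%:R.

Definition rel (k : 'I_3) : P6 := yv k ^+ 2 - xv k ^+ 3 + 1.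

Definition in_relI (p : P6) : Prop :=
  exists a : 'I_3 -> P6, p = \sum_(k < 3) a k * rel k.

(* equality in Rtilde = C[y,x]/(relations) *)
Definition eqRt (p q : P6) : Prop := in_relI (p - q).

Definition g_images : 6.-tuple P6 :=
  [tuple (match @split 3 3 i with inl k => omega *: xv k | inr k => - yv k end) | i < 6].
Definition gact (p : P6) : P6 := p \mPo g_images.

Definition x_monomials : seq P6 :=
  [seq xv ord0 ^+ t.1.1 * xv (inord 1) ^+ t.1.2 * xv (inord 2) ^+ t.2
  | t <- [seq (ij, k) | ij <- [seq (i, j) | i <- iota 0 3, j <- iota 0 3],
                          k <- iota 0 3]
  & (t.1.1 + t.1.2 + t.2 == 3)%N].

Definition R_gens : seq P6 :=
  let y0 := yv ord0 in let y1 := yv (inord 1) in let y2 := yv (inord 2) in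
  [:: y0 ^+ 2; y1 ^+ 2; y2 ^+ 2; y0 * y1; y1 * y2; y2 * y0]
  ++ x_monomials.

Definition in_gen_subalg (q : P6) : Prop :=
  exists r : {mpoly C[size R_gens]}, q = r \mPo in_tuple R_gens.

(* the class of p in Rtilde lies in R (image of the generated subalgebra) *)
Definition in_R (p : P6) : Prop := exists q, in_gen_subalg q /\ eqRt p q.

Definition g_invariant (p : P6) : Prop := eqRt (gact p) p.

End Defs.

(* Main.v *)
From Pilot Require Import Defs.
From HB Require Import structures.
From mathcomp Require Import all_boot all_order all_algebra.
From mathcomp Require Import mpoly.
From mathcomp Require Import complex.
From mathcomp Require Import reals.
From mathcomp Require Import ring zify.
Import Order.TTheory GRing.Theory Num.Theory Num.Def.
Local Open Scope ring_scope.
Section S.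
Variable C : numClosedFieldType.
Local Notation P := (P6 C).
Local Notation om := (omega C).

Lemma om_quad : om ^+ 2 + om + 1 = 0.
Proof.
rewrite /omega; set s := sqrtC _.
have hs : s ^+ 2 = -3 by rewrite /s sqrtCK.
have -> : ((-1 + s) / 2%:R) ^+ 2 + (-1 + s) / 2%:R + 1 = (s ^+ 2 + 3%:R) / 4%:R.
  by field.
by rewrite hs addNr mul0r.
Qed.

Lemma om3 : om ^+ 3 = 1.
Proof.
apply/eqP; rewrite -subr_eq0.
have -> : om ^+ 3 - 1 = (om - 1) * (om ^+ 2 + om + 1) by ring.
by rewrite om_quad mulr0.
Qed.

Lemma natr_ne0 k : (k.+1%:R : C) <> 0.
Proof. by move/eqP; rewrite pnatr_eq0. Qed.

Lemma lam_one (r t : nat) : (r < 3)%N -> (t < 2)%N -> om ^+ r * (-1) ^+ t = 1 ->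
  r = 0%N /\ t = 0%N.
Proof.
have q := om_quad.
case: r => [|[|[|//]]]; case: t => [|[|//]] // _ _; rewrite ?expr0 ?expr1 ?mulr1 ?mul1r => e.
- have h : (2%:R : C) = 1 - (-1) by ring.
  by rewrite e subrr in h; case: (natr_ne0 _ h).
- have h : (3%:R : C) = om ^+ 2 + om + 1 by rewrite e; ring.
  by rewrite q in h; case: (natr_ne0 _ h).
- have eo : om = -1 by rewrite -e; ring.
  have h : (1%:R : C) = om ^+ 2 + om + 1 by rewrite eo; ring.
  by rewrite q in h; case: (natr_ne0 _ h).
- have eo : om = (om ^+ 2 + om + 1) - om ^+ 2 - 1 by ring.
  rewrite q e in eo.
  have h : (3%:R : C) = om ^+ 2 - 1 by rewrite eo; ring.
  by rewrite e subrr in h; case: (natr_ne0 _ h).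
- have e2 : om ^+ 2 = -1 by rewrite -e; ring.
  have eo : om = (om ^+ 2 + om + 1) - om ^+ 2 - 1 by ring.
  rewrite q e2 in eo; rewrite eo in e2.
  have h : (1%:R : C) = (0 - -1 - 1) ^+ 2 + 1 by ring.
  by rewrite e2 addNr in h; case: (natr_ne0 _ h).
Qed.
Lemma gact_xv k : gact (xv C k) = om *: xv C k.
Proof.
rewrite /gact /xv comp_mpolyXU -tnth_nth tnth_mktuple.
by rewrite (unsplitK (inl k)).
Qed.

Lemma gact_yv k : gact (yv C k) = - yv C k.
Proof.
rewrite /gact /yv comp_mpolyXU -tnth_nth tnth_mktuple.
by rewrite (unsplitK (inr k)).
Qed.

Definition lam (m : 'X_{1..6}) : C :=
  om ^+ (\sum_(k < 3) m (lshift 3 k)) * (-1) ^+ (\sum_(k < 3) m (rshift 3 k)).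

Lemma Xm_split (m : 'X_{1..6}) : 'X_[m] =
  (\prod_(k < 3) xv C k ^+ m (lshift 3 k)) * \prod_(k < 3) yv C k ^+ m (rshift 3 k).
Proof. by rewrite mpolyXE_id (@big_split_ord _ _ _ 3 3). Qed.

Lemma gactXm m : gact 'X_[m] = lam m *: 'X_[m].
Proof.
rewrite Xm_split /gact rmorphM !rmorph_prod /=.
rewrite (eq_bigr (fun k : 'I_3 => (om ^+ m (lshift 3 k)) *: xv C k ^+ m (lshift 3 k))); last first.
  by move=> k _; rewrite rmorphXn /= -/(gact _) gact_xv exprZn.
rewrite [X in _ * X](eq_bigr (fun k : 'I_3 => ((-1) ^+ m (rshift 3 k)) *: yv C k ^+ m (rshift 3 k))); last first.
  by move=> k _; rewrite rmorphXn /= -/(gact _) gact_yv -scaleN1r exprZn.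
by rewrite !scaler_prod !prodrXr -scalerAl -scalerAr scalerA.
Qed.
Lemma gact_rel k : gact (Pilot.Defs.rel C k) = Pilot.Defs.rel C k.
Proof.
rewrite /Pilot.Defs.rel /gact rmorphD rmorphB !rmorphXn /= -!/(gact _) gact_xv gact_yv /gact rmorph1.
by rewrite sqrrN exprZn om3 scale1r.
Qed.

Lemma I0 : in_relI (0 : P).
Proof. by exists (fun _ => 0); rewrite big1 // => k _; rewrite mul0r. Qed.

Lemma ID (p q : P) : in_relI p -> in_relI q -> in_relI (p + q).
Proof.
move=> [a ->] [b ->]; exists (fun k => a k + b k).
by rewrite -big_split /=; apply: eq_bigr => k _; rewrite mulrDl.
Qed.

Lemma IM (c p : P) : in_relI p -> in_relI (c * p).
Proof.
move=> [a ->]; exists (fun k => c * a k).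
by rewrite mulr_sumr; apply: eq_bigr => k _; rewrite mulrA.
Qed.

Lemma IN (p : P) : in_relI p -> in_relI (- p).
Proof. by move=> h; rewrite -mulN1r; apply: IM. Qed.

Lemma IB (p q : P) : in_relI p -> in_relI q -> in_relI (p - q).
Proof. by move=> hp hq; apply: ID => //; apply: IN. Qed.

Lemma IZ (c : C) (p : P) : in_relI p -> in_relI (c *: p).
Proof. by move=> h; rewrite -mul_mpolyC; apply: IM. Qed.

Lemma Igact (p : P) : in_relI p -> in_relI (gact p).
Proof.
move=> [a ->]; exists (fun k => gact (a k)).
rewrite /gact rmorph_sum; apply: eq_bigr => k _.
by rewrite rmorphM /= -/(gact (Pilot.Defs.rel C k)) gact_rel.
Qed.
Local Notation G := (@in_gen_subalg C).
Local Notation tg := (in_tuple (R_gens C)).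

Lemma G0 : G 0.
Proof. by exists 0; rewrite comp_mpoly0. Qed.
Lemma G1 : G 1.
Proof. by exists 1; rewrite comp_mpoly1. Qed.
Lemma GD p q : G p -> G q -> G (p + q).
Proof. by move=> [r ->] [s ->]; exists (r + s); rewrite comp_mpolyD. Qed.
Lemma GM p q : G p -> G q -> G (p * q).
Proof. by move=> [r ->] [s ->]; exists (r * s); rewrite rmorphM. Qed.
Lemma GZ c p : G p -> G (c *: p).
Proof. by move=> [r ->]; exists (c *: r); rewrite comp_mpolyZ. Qed.
Lemma Ggen q : q \in R_gens C -> G q.
Proof.
move=> hq; have hi : (index q (R_gens C) < size (R_gens C))%N by rewrite index_mem.
exists 'X_(Ordinal hi).
by rewrite comp_mpolyXU /= nth_index.
Qed.

Local Notation S := (@in_R C).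

Lemma Sdef p q : G q -> in_relI (p - q) -> S p.
Proof. by move=> hq hpq; exists q. Qed.

Lemma Srel p q : S p -> in_relI (q - p) -> S q.
Proof.
move=> [r [hr hpr]] hqp; exists r; split => //.
rewrite /eqRt (_ : q - r = (q - p) + (p - r)); first exact: ID.
by rewrite addrA subrK.
Qed.

Lemma S0 : S 0.
Proof. by exists 0; split; [exact: G0 | rewrite /eqRt subrr; exact: I0]. Qed.
Lemma S1 : S 1.
Proof. by exists 1; split; [exact: G1 | rewrite /eqRt subrr; exact: I0]. Qed.
Lemma Sgen q : q \in R_gens C -> S q.
Proof. by move=> h; exists q; split; [exact: Ggen | rewrite /eqRt subrr; exact: I0]. Qed.
Lemma SD p q : S p -> S q -> S (p + q).
Proof.
move=> [r [hr hpr]] [s [hs hqs]]; exists (r + s); split; first exact: GD.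
rewrite /eqRt (_ : p + q - (r + s) = (p - r) + (q - s)); first exact: ID.
by rewrite opprD addrACA.
Qed.
Lemma SZ c p : S p -> S (c *: p).
Proof.
move=> [r [hr hpr]]; exists (c *: r); split; first exact: GZ.
by rewrite /eqRt -scalerBr; apply: IZ.
Qed.
Lemma SM p q : S p -> S q -> S (p * q).
Proof.
move=> [r [hr hpr]] [s [hs hqs]]; exists (r * s); split; first exact: GM.
rewrite /eqRt (_ : p * q - r * s = p * (q - s) + s * (p - r)).
  by apply: ID; apply: IM.
by ring.
Qed.
Lemma SX p n : S p -> S (p ^+ n).
Proof. by move=> h; elim: n => [|n ih]; [rewrite expr0; exact: S1 | rewrite exprS; apply: SM]. Qed.
Lemma Ssum (I : Type) (r : seq I) (F : I -> P) : (forall i, S (F i)) -> S (\sum_(i <- r) F i).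
Proof. by move=> h; elim: r => [|i r ih]; rewrite ?big_nil ?big_cons; [exact: S0 | apply: SD]. Qed.
Local Notation x0 := (xv C ord0).
Local Notation x1 := (xv C (inord 1)).
Local Notation x2 := (xv C (inord 2)).
Local Notation y0 := (yv C ord0).
Local Notation y1 := (yv C (inord 1)).
Local Notation y2 := (yv C (inord 2)).

Lemma ord3 (k : 'I_3) : k = ord0 \/ k = inord 1 \/ k = inord 2.
Proof.
case: k => [[|[|[|//]]] h].
- by left; apply: val_inj.
- by right; left; apply: val_inj; rewrite /= inordK.
- by right; right; apply: val_inj; rewrite /= inordK.
Qed.

Lemma Sy2 k : S (yv C k ^+ 2).
Proof.
apply: Sgen; rewrite /R_gens mem_cat !inE.
by case: (ord3 k) => [->|[->|->]]; rewrite eqxx ?orbT.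
Qed.

Lemma Irel k : in_relI (Pilot.Defs.rel C k).
Proof.
exists (fun j => (j == k)%:R); rewrite (bigD1 k) //= eqxx mul1r big1 ?addr0 //.
by move=> j /negbTE ->; rewrite mul0r.
Qed.

Lemma Sx3 k : S (xv C k ^+ 3).
Proof.
apply: (@Srel (yv C k ^+ 2 + 1)); first by apply: SD; [exact: Sy2 | exact: S1].
rewrite (_ : _ - _ = - Pilot.Defs.rel C k); first by apply: IN; apply: Irel.
by rewrite /Pilot.Defs.rel; ring.
Qed.

Lemma Sxmon a0 a1 a2 : (a0 < 3)%N -> (a1 < 3)%N -> (a2 < 3)%N -> (a0 + a1 + a2 = 3)%N ->
  S (x0 ^+ a0 * x1 ^+ a1 * x2 ^+ a2).
Proof.
move=> h0 h1 h2 hs; apply: Sgen; rewrite /R_gens mem_cat; apply/orP; right.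
rewrite /x_monomials; apply/mapP; exists ((a0, a1), a2) => //.
rewrite mem_filter /= hs eqxx /=.
by move: h0 h1 h2 {hs}; case: a0 => [|[|[|//]]]; case: a1 => [|[|[|//]]]; case: a2 => [|[|[|//]]].
Qed.

Lemma Sxpart a0 a1 a2 : (3 %| a0 + a1 + a2)%N -> S (x0 ^+ a0 * x1 ^+ a1 * x2 ^+ a2).
Proof.
have [n] := ubnP (a0 + a1 + a2); elim: n a0 a1 a2 => // n ih a0 a1 a2 lt hd.
case: (leqP 3 a0) => h0.
  rewrite -(subnK h0) exprD (_ : _ * _ * _ = (x0 ^+ (a0 - 3) * x1 ^+ a1 * x2 ^+ a2) * x0 ^+ 3); last by ring.
  apply: SM; last exact: Sx3.
  apply: ih; first by lia.
  by move: hd; lia.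
case: (leqP 3 a1) => h1.
  rewrite -(subnK h1) exprD (_ : _ * _ * _ = (x0 ^+ a0 * x1 ^+ (a1 - 3) * x2 ^+ a2) * x1 ^+ 3); last by ring.
  apply: SM; last exact: Sx3.
  apply: ih; first by lia.
  by move: hd; lia.
case: (leqP 3 a2) => h2.
  rewrite -(subnK h2) exprD (_ : _ * _ * _ = (x0 ^+ a0 * x1 ^+ a1 * x2 ^+ (a2 - 3)) * x2 ^+ 3); last by ring.
  apply: SM; last exact: Sx3.
  apply: ih; first by lia.
  by move: hd; lia.
move: hd h0 h1 h2 {lt}; case: a0 => [|[|[|//]]]; case: a1 => [|[|[|//]]]; case: a2 => [|[|[|//]]] //= _ _ _ _;
  try (by apply: Sxmon).
- by rewrite !expr0 !mulr1; exact: S1.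
- rewrite (_ : _ * _ * _ = (x0 ^+ 1 * x1 ^+ 1 * x2 ^+ 1) ^+ 2); last by ring.
  by apply: SX; apply: Sxmon.
Qed.

Lemma Sgen' q : q \in R_gens C -> S q. Proof. exact: Sgen. Qed.

Lemma Sypart b0 b1 b2 : (2 %| b0 + b1 + b2)%N -> S (y0 ^+ b0 * y1 ^+ b1 * y2 ^+ b2).
Proof.
have [n] := ubnP (b0 + b1 + b2); elim: n b0 b1 b2 => // n ih b0 b1 b2 lt hd.
case: (leqP 2 b0) => h0.
  rewrite -(subnK h0) exprD (_ : _ * _ * _ = (y0 ^+ (b0 - 2) * y1 ^+ b1 * y2 ^+ b2) * y0 ^+ 2); last by ring.
  apply: SM; last exact: Sy2.
  apply: ih; first by lia.
  by move: hd; lia.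
case: (leqP 2 b1) => h1.
  rewrite -(subnK h1) exprD (_ : _ * _ * _ = (y0 ^+ b0 * y1 ^+ (b1 - 2) * y2 ^+ b2) * y1 ^+ 2); last by ring.
  apply: SM; last exact: Sy2.
  apply: ih; first by lia.
  by move: hd; lia.
case: (leqP 2 b2) => h2.
  rewrite -(subnK h2) exprD (_ : _ * _ * _ = (y0 ^+ b0 * y1 ^+ b1 * y2 ^+ (b2 - 2)) * y2 ^+ 2); last by ring.
  apply: SM; last exact: Sy2.
  apply: ih; first by lia.
  by move: hd; lia.
move: hd h0 h1 h2 {lt}; case: b0 => [|[|//]]; case: b1 => [|[|//]]; case: b2 => [|[|//]] //= _ _ _ _.
- by rewrite !expr0 !mulr1; exact: S1.
- rewrite (_ : _ * _ * _ = y1 * y2); last by ring.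
  by apply: Sgen; rewrite /R_gens mem_cat !inE eqxx ?orbT.
- rewrite (_ : _ * _ * _ = y2 * y0); last by ring.
  by apply: Sgen; rewrite /R_gens mem_cat !inE eqxx ?orbT.
- rewrite (_ : _ * _ * _ = y0 * y1); last by ring.
  by apply: Sgen; rewrite /R_gens mem_cat !inE eqxx ?orbT.
Qed.

Lemma prod3 (F : 'I_3 -> P) : \prod_(k < 3) F k = F ord0 * F (inord 1) * F (inord 2).
Proof.
rewrite !big_ord_recl big_ord0 mulr1 mulrA; congr (F _ * F _ * F _);
  by apply: val_inj; rewrite /= inordK.
Qed.

Lemma sum3 (F : 'I_3 -> nat) : (\sum_(k < 3) F k = F ord0 + F (inord 1) + F (inord 2))%N.
Proof.
rewrite !big_ord_recl big_ord0 addn0 addnA; congr (F _ + F _ + F _)%N;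
  by apply: val_inj; rewrite /= inordK.
Qed.

Lemma lam_div m : lam m = 1 ->
  (3 %| \sum_(k < 3) m (lshift 3 k))%N /\ (2 %| \sum_(k < 3) m (rshift 3 k))%N.
Proof.
rewrite /lam; set A := (\sum_(k < 3) _)%N; set B := (\sum_(k < 3) _)%N => e.
have eA : om ^+ A = om ^+ (A %% 3) by rewrite {1}(divn_eq A 3) exprD mulnC exprM om3 expr1n mul1r.
rewrite eA -signr_odd in e.
have [] := @lam_one _ _ (ltn_pmod A (isT : (0 < 3)%N)) (leq_b1 _ : (odd B < 2)%N) e.
by move=> hA hB; split; [apply/eqP | move: hB; rewrite dvdn2; case: (odd B)].
Qed.

Lemma Smono m : lam m = 1 -> S 'X_[m].
Proof.
move=> /lam_div []; rewrite !sum3 => ha hb.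
by rewrite Xm_split !prod3; apply: SM; [apply: Sxpart | apply: Sypart].
Qed.

Lemma gact_sum (I : Type) (r : seq I) (F : I -> P) :
  gact (\sum_(i <- r) F i) = \sum_(i <- r) gact (F i).
Proof. exact: raddf_sum. Qed.
Lemma gactB (p q : P) : gact (p - q) = gact p - gact q.
Proof. exact: raddfB. Qed.
Lemma gactZ c (p : P) : gact (c *: p) = c *: gact p.
Proof. exact: comp_mpolyZ. Qed.

Lemma iter_gactE i p : iter i (@gact C) p = \sum_(m <- msupp p) (p@_m * lam m ^+ i) *: 'X_[m].
Proof.
elim: i => [|i ih] /=.
  by rewrite {1}(mpolyE p); apply: eq_bigr => m _; rewrite expr0 mulr1.
rewrite ih gact_sum; apply: eq_bigr => m _.
rewrite gactZ gactXm scalerA exprSr; congr (_ *: _); exact: (esym (mulrA _ _ _)).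
Qed.

Lemma iter_inv i p : g_invariant p -> in_relI (iter i (@gact C) p - p).
Proof.
move=> hp; elim: i => [|i ih] /=; first by rewrite subrr; exact: I0.
rewrite (_ : _ - _ = gact (iter i (@gact C) p - p) + (gact p - p)).
  by apply: ID => //; apply: Igact.
by rewrite gactB addrA subrK.
Qed.

Lemma lam6 m : lam m ^+ 6 = 1.
Proof.
have o6 : om ^+ 6 = 1 by rewrite (exprM om 3 2) om3 expr1n.
have n6 : (-1 : C) ^+ 6 = 1 by rewrite (exprM (-1) 2 3) sqrrN expr1n expr1n.
by rewrite /lam exprMn -!exprM !(mulnC _ 6) !exprM o6 n6 !expr1n mulr1.
Qed.

Lemma inv_to_R p : g_invariant p -> S p.
Proof.
move=> hp.
set q := \sum_(i < 6) iter i (@gact C) p.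
have hI : in_relI (q - p *+ 6).
  rewrite (_ : p *+ 6 = \sum_(i < 6) p); last by rewrite sumr_const card_ord.
  rewrite -sumrB.
  by apply: (big_ind (@in_relI C)); [exact: I0 | exact: ID | move=> i _; exact: iter_inv].
have hq : S q.
  rewrite /q (eq_bigr _ (fun (i : 'I_6) _ => iter_gactE i p)) exchange_big /=.
  apply: Ssum => m.
  rewrite -scaler_suml -mulr_sumr.
  have [e|ne] := eqVneq (lam m) 1.
    by apply: SZ; apply: Smono.
  have -> : \sum_(i < 6) lam m ^+ i = 0.
    have := subrX1 (lam m) 6; rewrite lam6 subrr => /esym /eqP.
    by rewrite mulf_eq0 subr_eq0 (negbTE ne) /= => /eqP.
  by rewrite mulr0 scale0r; exact: S0.
apply: (@Srel ((6%:R)^-1 *: q)); first exact: SZ.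
have h6 : (6%:R : C) != 0 by rewrite pnatr_eq0.
rewrite (_ : _ - _ = - ((6%:R)^-1 *: (q - p *+ 6))); first by apply: IN; apply: IZ.
by rewrite scalerBr -scaler_nat scalerA mulVf // scale1r opprB.
Qed.

Lemma gact_gen q : q \in R_gens C -> gact q = q.
Proof.
rewrite /R_gens mem_cat => /orP [].
  rewrite !inE; do 5 (case/orP; first by move/eqP ->; rewrite /gact !(rmorphM, rmorphXn) /= -!/(gact _) !gact_yv ?sqrrN ?mulrNN).
  by move/eqP ->; rewrite /gact !(rmorphM, rmorphXn) /= -!/(gact _) !gact_yv ?sqrrN ?mulrNN.
rewrite /x_monomials => /mapP [[[a b] c]]; rewrite mem_filter /= => /andP [/eqP hs _] ->.
rewrite /gact !(rmorphM, rmorphXn) /= -!/(gact _) !gact_xv !exprZn.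
by rewrite -!scalerAl -!scalerAr !scalerA -!exprD -scalerAl scalerA -exprD addnAC hs om3 scale1r.
Qed.

Lemma R_to_inv p : S p -> g_invariant p.
Proof.
move=> [q [[r ->] hpq]].
have gq : gact (r \mPo tg) = r \mPo tg.
  rewrite comp_mpolyE gact_sum; apply: eq_bigr => m _.
  rewrite gactZ /gact rmorph_prod /=; congr (_ *: _); apply: eq_bigr => i _.
  by rewrite rmorphXn /= -/(gact _) gact_gen // mem_tnth.
rewrite /g_invariant /eqRt.
rewrite (_ : _ - _ = gact (p - (r \mPo tg)) - (p - (r \mPo tg))).
  by apply: IB => //; apply: Igact.
by rewrite gactB gq opprB addrA subrK.
Qed.
End S.

Theorem lemma2p2 (R : realType) (p : {mpoly (complex R)[6]}) :
  g_invariant p <-> in_R p.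
Proof. by split; [apply: inv_to_R | apply: R_to_inv]. Qed.
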